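(* Consider the system of ordinary differential equations, for $t\ge 0$, \begin{align*} \dot S &= \Lambda + \omega m Q - \big[\lambda(t)(1-p) + \phi p + \mu\big] S,\\ \dot A &= \lambda(t)(1-p) S - (q\upsilon+\mu) A,\\ \dot I &= q\upsilon A - (\delta_1+\mu) I,\\ \dot Q &= \phi p S + \delta_1 f_1 I + \delta_2(1-f_2-f_3) H - (\omega m+\mu) Q,\\ \dot H &= \delta_1(1-f_1) I + \eta(1-\kappa) H_{IC} - \big[\delta_2(1-f_2-f_3) + \delta_2 f_2 + \alpha_1 f_3 + \mu\big] H,\\ \dot H_{IC} &= \delta_2 f_2 H - \big[\eta(1-\kappa) + \alpha_2\kappa + \mu\big] H_{IC}, \end{align*} where $N(t)=S+A+I+Q+H+H_{IC}$ and $\lambda(t)=\beta\,[A(t)+I(t)+l_H H(t)]/N(t)$. Set $a_0=q\upsilon+\mu$, $a_1=\delta_1+\mu$, $a_2=m\omega+\mu$, $a_3=\delta_2(1-f_2-f_3)+\delta_2 f_2+\alpha_1 f_3+\mu$, $a_6=\delta_1(1-f_1)$, $\eta_\kappa=\eta(1-\kappa)$, $a_7=\alpha_2\kappa+\eta_\kappa+\mu$, $\chi=a_3a_7-\delta_2\eta_\kappa f_2$, and define $$R_0=\frac{\beta\, a_2\,(1-p)\Big[\big(l_H\, a_6\, q\upsilon+(a_1+q\upsilon)a_3\big)a_7-\delta_2\,\eta_\kappa\, f_2\,(q\upsilon+a_1)\Big]}{a_0\,a_1\,\chi\,(p\phi+a_2)}.$$ If $R_0>1$, then the system has a unique endemic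 equilibrium, i.e., a unique equilibrium $(S^*,A^*,I^*,Q^*,H^*,H_{IC}^* )$ whose force of infection $\lambda^*=\beta(A^*+I^*+l_H H^* )(1-p)/N^*$, with $N^*=S^*+A^*+I^*+Q^*+H^*+H_{IC}^*$, is strictly positive.
   Context: This is a compartmental COVID-19 model (susceptible $S$, asymptomatic infected $A$, symptomatic infected $I$, quarantined $Q$, hospitalized $H$, hospitalized in intensive care $H_{IC}$). All parameters are non-negative: $\Lambda>0$, $\mu>0$, $\beta>0$, $l_H>0$, $\phi,\upsilon,\delta_1,\delta_2,\eta,\omega,\alpha_1,\alpha_2>0$, and $p,q,f_1,f_2,f_3,\kappa,m\in[0,1]$ with $1-f_2-f_3\in[0,1]$. The relative transmissibility of class $A$ is taken equal to $1$. $R_0$ is called the basic reproduction number; an endemic equilibrium is an equilibrium of the system with strictly positive force of infection $\lambda^*$ (and $\chi>0$). *)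

(* Defs.v *)
From Stdlib Require Import Reals Lra.
Open Scope R_scope.

Record params := mkParams {
  Lam : R; mu : R; beta : R; lH : R;
  phi : R; ups : R; delta1 : R; delta2 : R; eta : R; omega : R;
  alpha1 : R; alpha2 : R;
  p : R; q : R; f1 : R; f2 : R; f3 : R; kappa : R; m : R }.

Definition in01 (x : R) : Prop := 0 <= x <= 1.

Definition valid_params (P : params) : Prop :=
  0 < Lam P /\ 0 < mu P /\ 0 < beta P /\ 0 < lH P /\
  0 < phi P /\ 0 < ups P /\ 0 < delta1 P /\ 0 < delta2 P /\ 0 < eta P /\
  0 < omega P /\ 0 < alpha1 P /\ 0 < alpha2 P /\
  in01 (p P) /\ in01 (q P) /\ in01 (f1 P) /\ in01 (f2 P) /\ in01 (f3 P) /\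
  in01 (kappa P) /\ in01 (m P) /\ in01 (1 - f2 P - f3 P).

Record state := mkState { sS : R; sA : R; sI : R; sQ : R; sH : R; sHIC : R }.

Definition Ntot (x : state) : R := sS x + sA x + sI x + sQ x + sH x + sHIC x.

Definition lam (P : params) (x : state) : R :=
  beta P * (sA x + sI x + lH P * sH x) / Ntot x.

Definition rhs_S P x := Lam P + omega P * m P * sQ x
  - (lam P x * (1 - p P) + phi P * p P + mu P) * sS x.
Definition rhs_A P x := lam P x * (1 - p P) * sS x - (q P * ups P + mu P) * sA x.
Definition rhs_I P x := q P * ups P * sA x - (delta1 P + mu P) * sI x.
Definition rhs_Q P x := phi P * p P * sS x + delta1 P * f1 P * sI x
  + delta2 P * (1 - f2 P - f3 P) * sH x - (omega P * m P + mu P) * sQ x.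
Definition rhs_H P x := delta1 P * (1 - f1 P) * sI x + eta P * (1 - kappa P) * sHIC x
  - (delta2 P * (1 - f2 P - f3 P) + delta2 P * f2 P + alpha1 P * f3 P + mu P) * sH x.
Definition rhs_HIC P x := delta2 P * f2 P * sH x
  - (eta P * (1 - kappa P) + alpha2 P * kappa P + mu P) * sHIC x.

Definition equilibrium (P : params) (x : state) : Prop :=
  0 <= sS x /\ 0 <= sA x /\ 0 <= sI x /\ 0 <= sQ x /\ 0 <= sH x /\ 0 <= sHIC x /\
  0 < Ntot x /\
  rhs_S P x = 0 /\ rhs_A P x = 0 /\ rhs_I P x = 0 /\
  rhs_Q P x = 0 /\ rhs_H P x = 0 /\ rhs_HIC P x = 0.

Definition force_inf (P : params) (x : state) : R :=
  beta P * (sA x + sI x + lH P * sH x) * (1 - p P) / Ntot x.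

Definition endemic_equilibrium (P : params) (x : state) : Prop :=
  equilibrium P x /\ 0 < force_inf P x.

Definition a0 P := q P * ups P + mu P.
Definition a1 P := delta1 P + mu P.
Definition a2 P := m P * omega P + mu P.
Definition a3 P := delta2 P * (1 - f2 P - f3 P) + delta2 P * f2 P + alpha1 P * f3 P + mu P.
Definition a6 P := delta1 P * (1 - f1 P).
Definition eta_k P := eta P * (1 - kappa P).
Definition a7 P := alpha2 P * kappa P + eta_k P + mu P.
Definition chi P := a3 P * a7 P - delta2 P * eta_k P * f2 P.

Definition basicR0 (P : params) : R :=
  beta P * a2 P * (1 - p P) *
    ((lH P * a6 P * q P * ups P + (a1 P + q P * ups P) * a3 P) * a7 P
     - delta2 P * eta_k P * f2 P * (q P * ups P + a1 P))
  / (a0 P * a1 P * chi P * (p P * phi P + a2 P)).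

(* Main.v *)
Require Import Defs.
From Stdlib Require Import Reals Lra Psatz.
Open Scope R_scope.

Definition ph P := phi P * p P.
Definition b1 P := delta1 P * f1 P.
Definition b2 P := delta2 P * (1 - f2 P - f3 P).
Definition cc P := delta2 P * f2 P.
Definition om P := omega P * m P.
Definition qu P := q P * ups P.
Definition onep P := 1 - p P.

Definition Kc P := / a0 P + qu P / (a0 P * a1 P) + lH P * a6 P * a7 P * qu P / (a0 P * a1 P * chi P).
Definition Tc P := / a0 P + qu P / (a0 P * a1 P) + a6 P * a7 P * qu P / (a0 P * a1 P * chi P)
   + cc P * a6 P * qu P / (a0 P * a1 P * chi P).
Definition dc P := b1 P * qu P / (a0 P * a1 P) + b2 P * a6 P * a7 P * qu P / (a0 P * a1 P * chi P).
Definition Gc P := beta P * onep P * Kc P - 1 - ph P / a2 P.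
Definition Dc P L := L + ph P + mu P - om P * (ph P + dc P * L) / a2 P.

Definition mkx P L S := mkState S (L * S / a0 P) (qu P * L * S / (a0 P * a1 P))
  (S * (ph P + dc P * L) / a2 P) (a6 P * a7 P * qu P * L * S / (a0 P * a1 P * chi P))
  (cc P * a6 P * qu P * L * S / (a0 P * a1 P * chi P)).

Lemma rS P x : rhs_S P x = Lam P + om P * sQ x - (force_inf P x + ph P + mu P) * sS x.
Proof. unfold rhs_S, force_inf, lam, om, ph. unfold Rdiv. ring. Qed.
Lemma rA P x : rhs_A P x = force_inf P x * sS x - a0 P * sA x.
Proof. unfold rhs_A, force_inf, lam, a0. unfold Rdiv. ring. Qed.
Lemma rI P x : rhs_I P x = qu P * sA x - a1 P * sI x.
Proof. unfold rhs_I, qu, a1. ring. Qed.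
Lemma rQ P x : rhs_Q P x = ph P * sS x + b1 P * sI x + b2 P * sH x - a2 P * sQ x.
Proof. unfold rhs_Q, ph, b1, b2, a2. ring. Qed.
Lemma rH P x : rhs_H P x = a6 P * sI x + eta_k P * sHIC x - a3 P * sH x.
Proof. unfold rhs_H, a6, eta_k, a3. ring. Qed.
Lemma rC P x : rhs_HIC P x = cc P * sH x - a7 P * sHIC x.
Proof. unfold rhs_HIC, cc, a7, eta_k. ring. Qed.
Lemma chiE P : chi P = a3 P * a7 P - cc P * eta_k P.
Proof. unfold chi, cc. ring. Qed.

Lemma facts P : valid_params P -> 0 < chi P ->
  0 < a0 P /\ 0 < a1 P /\ 0 < a2 P /\ 0 < a7 P /\ 0 < mu P /\ 0 <= qu P /\
  0 <= a6 P /\ 0 <= cc P /\ 0 <= b1 P /\ 0 <= b2 P /\ 0 <= ph P /\ 0 <= om P /\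
  0 <= eta_k P /\ 0 < Lam P /\ 0 < beta P /\ 0 < lH P /\ 0 <= onep P /\
  qu P < a0 P /\ b1 P + a6 P <= a1 P /\ b2 P * a7 P <= chi P /\ a2 P = om P + mu P.
Proof.
  intros [HL [Hmu [Hb [HlH [Hphi [Hups [Hd1 [Hd2 [Het [How [Hal1 [Hal2
    [[Hp0 Hp1] [[Hq0 Hq1] [[Hf10 Hf11] [[Hf20 Hf21] [[Hf30 Hf31] [[Hk0 Hk1] [[Hm0 Hm1] [Hg0 Hg1]]]]]]]]]]]]]]]]]]]] Hchi.
  assert (Hqu : 0 <= qu P) by (unfold qu; nra).
  assert (Hek : 0 <= eta_k P) by (unfold eta_k; nra).
  assert (Ha7 : 0 < a7 P) by (unfold a7; nra).
  repeat split; unfold a0, a1, a2, a6, cc, b1, b2, ph, om, onep in *; try nra.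
  - unfold qu; lra.
  - rewrite chiE. unfold a3, cc.
    assert (0 <= delta2 P * f2 P) by nra.
    assert (0 <= alpha1 P * f3 P) by nra.
    assert (eta_k P <= a7 P) by (unfold a7; nra).
    nra.
Qed.

Lemma Rdiv_le_0_compat a b : 0 <= a -> 0 < b -> 0 <= a / b.
Proof. intros. unfold Rdiv. apply Rmult_le_pos; [lra|]. left; apply Rinv_0_lt_compat; lra. Qed.

Lemma Kpos P : valid_params P -> 0 < chi P -> 0 < Kc P.
Proof.
  intros HV Hc. destruct (facts P HV Hc) as (?&?&?&?&?&?&?&?&?&?&?&?&?&?&?&?&?&?&?&?&?).
  unfold Kc. assert (0 < / a0 P) by (apply Rinv_0_lt_compat; lra).
  assert (0 <= qu P / (a0 P * a1 P)) by (apply Rdiv_le_0_compat; nra).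
  assert (0 <= lH P * a6 P * a7 P * qu P / (a0 P * a1 P * chi P)).
  { apply Rdiv_le_0_compat; [|apply Rmult_lt_0_compat; nra].
    apply Rmult_le_pos; [|lra]. apply Rmult_le_pos; [|lra]. nra. }
  lra.
Qed.

Lemma Tpos P : valid_params P -> 0 < chi P -> 0 < Tc P /\ 0 <= dc P /\ dc P <= 1.
Proof.
  intros HV Hc. destruct (facts P HV Hc) as (?&?&?&?&?&?&?&?&?&?&?&?&?&?&?&?&?&?&?&?&?).
  assert (0 < a0 P * a1 P * chi P) by (apply Rmult_lt_0_compat; nra).
  assert (0 < / a0 P) by (apply Rinv_0_lt_compat; lra).
  assert (0 <= qu P / (a0 P * a1 P)) by (apply Rdiv_le_0_compat; nra).
  assert (0 <= a6 P * a7 P * qu P / (a0 P * a1 P * chi P)).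
  { apply Rdiv_le_0_compat; [|lra]. apply Rmult_le_pos; [|lra]. nra. }
  assert (0 <= cc P * a6 P * qu P / (a0 P * a1 P * chi P)).
  { apply Rdiv_le_0_compat; [|lra]. apply Rmult_le_pos; [|lra]. nra. }
  assert (0 <= b1 P * qu P / (a0 P * a1 P)) by (apply Rdiv_le_0_compat; nra).
  assert (0 <= b2 P * a6 P * a7 P * qu P / (a0 P * a1 P * chi P)).
  { apply Rdiv_le_0_compat; [|lra]. apply Rmult_le_pos; [|lra].
    apply Rmult_le_pos; [|lra]. nra. }
  split; [unfold Tc; lra|]. split; [unfold dc; lra|].
  assert (E : dc P * (a0 P * a1 P * chi P) = qu P * (b1 P * chi P + a6 P * (b2 P * a7 P))).
  { unfold dc. field. split; [|split]; lra. }
  assert (a6 P * (b2 P * a7 P) <= a6 P * chi P) by (apply Rmult_le_compat_l; lra).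
  assert (qu P * (b1 P * chi P + a6 P * (b2 P * a7 P)) <= qu P * (chi P * a1 P)).
  { apply Rmult_le_compat_l; [lra|]. nra. }
  assert (qu P * (chi P * a1 P) <= a0 P * a1 P * chi P).
  { assert (0 < chi P * a1 P) by nra. nra. }
  nra.
Qed.

Lemma exist_core P L S : valid_params P -> 0 < chi P -> 0 < onep P ->
  0 < L -> 0 < S -> L * (Tc P + dc P / a2 P) = Gc P -> S * Dc P L = Lam P ->
  endemic_equilibrium P (mkx P L S).
Proof.
  intros HV Hc Ho HL HS EL ES.
  destruct (facts P HV Hc) as (?&?&?&?&?&?&?&?&?&?&?&?&?&?&?&?&?&?&?&?&?).
  destruct (Tpos P HV Hc) as (HT & Hd0 & Hd1). pose proof (Kpos P HV Hc) as HK.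
  assert (HN : Ntot (mkx P L S) = S * (beta P * onep P * Kc P)).
  { transitivity (S * (1 + ph P / a2 P + L * (Tc P + dc P / a2 P))).
    - unfold Ntot, mkx, Tc; simpl. field. repeat split; lra.
    - rewrite EL. unfold Gc. field. lra. }
  assert (HF : force_inf P (mkx P L S) = L).
  { unfold force_inf. rewrite HN.
    transitivity (beta P * (L * S * Kc P) * onep P / (S * (beta P * onep P * Kc P))).
    - f_equal. f_equal. f_equal. unfold mkx, Kc; simpl. field. repeat split; lra.
    - field. repeat split; lra. }
  assert (0 < a0 P * a1 P) by nra.
  assert (0 < a0 P * a1 P * chi P) by nra.
  split; [|lra].
  unfold equilibrium. rewrite rS, rA, rI, rQ, rH, rC, HF, HN.
  unfold mkx; simpl.
  repeat split.
  - lra.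
  - apply Rdiv_le_0_compat; nra.
  - apply Rdiv_le_0_compat; [|lra]. apply Rmult_le_pos; nra.
  - apply Rdiv_le_0_compat; [|lra]. apply Rmult_le_pos; [lra|]. nra.
  - apply Rdiv_le_0_compat; [|lra]. assert (0 <= a6 P * a7 P) by nra. assert (0 <= a6 P * a7 P * qu P) by nra. assert (0 <= a6 P * a7 P * qu P * L) by nra. nra.
  - apply Rdiv_le_0_compat; [|lra]. assert (0 <= cc P * a6 P) by nra. assert (0 <= cc P * a6 P * qu P) by nra. assert (0 <= cc P * a6 P * qu P * L) by nra. nra.
  - apply Rmult_lt_0_compat; [lra|]. apply Rmult_lt_0_compat; [|lra].
    apply Rmult_lt_0_compat; lra.
  - rewrite <- ES. unfold Dc. field. lra.
  - field. lra.
  - field. lra.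
  - unfold dc. field. repeat split; lra.
  - rewrite chiE. field. rewrite <- chiE. repeat split; lra.
  - field. repeat split; lra.
Qed.

Lemma uniq_core P y : valid_params P -> 0 < chi P -> 0 < onep P ->
  endemic_equilibrium P y ->
  y = mkx P (force_inf P y) (sS y) /\ 0 < sS y /\
  force_inf P y * (Tc P + dc P / a2 P) = Gc P /\ sS y * Dc P (force_inf P y) = Lam P.
Proof.
  intros HV Hc Ho [(H0S & H0A & H0I & H0Q & H0H & H0C & HN & ES & EA & EI & EQ & EH & EC) HF].
  destruct (facts P HV Hc) as (?&?&?&?&?&?&?&?&?&?&?&?&?&?&?&?&?&?&?&?&?).
  destruct (Tpos P HV Hc) as (HT & Hd0 & Hd1). pose proof (Kpos P HV Hc) as HK.
  rewrite rS in ES. rewrite rA in EA. rewrite rI in EI. rewrite rQ in EQ.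
  rewrite rH in EH. rewrite rC in EC.
  assert (HSp : 0 < sS y).
  { destruct H0S as [|HS0]; [lra|]. rewrite <- HS0 in ES. nra. }
  assert (Ey : y = mkx P (force_inf P y) (sS y)).
  { assert (eA : sA y = force_inf P y * sS y / a0 P) by (field_simplify_eq; lra).
    assert (eI : sI y = qu P * force_inf P y * sS y / (a0 P * a1 P)).
    { apply (Rmult_eq_reg_r (a1 P)); [|lra]. replace (sI y * a1 P) with (qu P * sA y) by lra.
      rewrite eA. field. lra. }
    assert (eC : sHIC y = cc P * sH y / a7 P) by (field_simplify_eq; lra).
    assert (eH : sH y = a6 P * a7 P * qu P * force_inf P y * sS y / (a0 P * a1 P * chi P)).
    { assert (sH y * chi P = a6 P * a7 P * sI y).
      { assert (X1 : a7 P * (a6 P * sI y + eta_k P * sHIC y - a3 P * sH y) = 0) by (rewrite EH; ring).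
        assert (X2 : eta_k P * (cc P * sH y - a7 P * sHIC y) = 0) by (rewrite EC; ring).
        rewrite chiE. lra. }
      rewrite eI in H20. apply (Rmult_eq_reg_r (chi P)); [|lra]. rewrite H20. field.
      repeat split; lra. }
    assert (eQ : sQ y = sS y * (ph P + dc P * force_inf P y) / a2 P).
    { apply (Rmult_eq_reg_r (a2 P)); [|lra]. replace (sQ y * a2 P) with
       (ph P * sS y + b1 P * sI y + b2 P * sH y) by lra.
      rewrite eI, eH. unfold dc. field. repeat split; lra. }
    transitivity (mkState (sS y) (sA y) (sI y) (sQ y) (sH y) (sHIC y)); [destruct y; reflexivity|].
    unfold mkx. f_equal; [exact eA|exact eI|exact eQ|exact eH|].
    rewrite eC, eH. field. repeat split; lra. }
  split; [exact Ey|]. split; [exact HSp|].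
  assert (HL : force_inf P y * Ntot y = beta P * (sA y + sI y + lH P * sH y) * onep P).
  { unfold force_inf, onep. field. lra. }
  set (L := force_inf P y) in *. set (S := sS y) in *. clearbody L S. subst y.
  unfold mkx in ES, HL. simpl in ES, HL. unfold Ntot in HL. simpl in HL.
  assert (0 < a0 P * a1 P) by nra.
  assert (0 < a0 P * a1 P * chi P) by nra.
  split.
  - assert (HL2 : L * S * (1 + ph P / a2 P + L * (Tc P + dc P / a2 P)) = L * S * (beta P * onep P * Kc P)).
    { transitivity (L * (S + L * S / a0 P + qu P * L * S / (a0 P * a1 P) +
       S * (ph P + dc P * L) / a2 P + a6 P * a7 P * qu P * L * S / (a0 P * a1 P * chi P) +
       cc P * a6 P * qu P * L * S / (a0 P * a1 P * chi P))).
      - unfold Tc. field. repeat split; lra.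
      - rewrite HL. unfold Kc. field. repeat split; lra. }
    apply Rmult_eq_reg_l in HL2; [|nra]. unfold Gc. lra.
  - assert (S * Dc P L = (L + ph P + mu P) * S - om P * (S * (ph P + dc P * L) / a2 P))
      by (unfold Dc; field; lra). lra.
Qed.

Theorem mainTheorem3 (P : params) :
  valid_params P -> 0 < chi P -> 1 < basicR0 P ->
  exists x : state, endemic_equilibrium P x /\
    forall y : state, endemic_equilibrium P y -> y = x.
Proof.
  intros HV Hc HR0.
  destruct (facts P HV Hc) as (?&?&?&?&?&?&?&?&?&?&?&?&?&?&?&?&Hon&?&?&?&Ha2).
  destruct (Tpos P HV Hc) as (HT & Hd0 & Hd1). pose proof (Kpos P HV Hc) as HK.
  assert (HR : basicR0 P = beta P * onep P * Kc P * a2 P / (ph P + a2 P)).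
  { unfold basicR0.
    replace ((lH P * a6 P * q P * ups P + (a1 P + q P * ups P) * a3 P) * a7 P
     - delta2 P * eta_k P * f2 P * (q P * ups P + a1 P))
      with ((a1 P + qu P) * chi P + lH P * a6 P * a7 P * qu P)
      by (rewrite chiE; unfold qu, cc; ring).
    unfold Kc, onep, ph. replace (p P * phi P) with (phi P * p P) by ring.
    field. unfold ph in *. repeat split; lra. }
  assert (Ho : 0 < onep P).
  { destruct Hon as [|E]; [lra|]. rewrite HR, <- E in HR0. lra. }
  assert (HG : 0 < Gc P).
  { rewrite HR in HR0. apply (Rmult_lt_compat_r (ph P + a2 P)) in HR0; [|lra].
    unfold Rdiv in HR0. rewrite Rmult_assoc, Rinv_l, Rmult_1_r in HR0; [|lra].
    unfold Gc. apply (Rmult_lt_reg_r (a2 P)); [lra|].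
    replace ((beta P * onep P * Kc P - 1 - ph P / a2 P) * a2 P) with
      (beta P * onep P * Kc P * a2 P - (ph P + a2 P)) by (field; lra). lra. }
  assert (HX : 0 < Tc P + dc P / a2 P).
  { assert (0 <= dc P / a2 P) by (apply Rdiv_le_0_compat; lra). lra. }
  set (Ls := Gc P / (Tc P + dc P / a2 P)).
  assert (HLs : 0 < Ls) by (apply Rdiv_lt_0_compat; lra).
  assert (HLe : Ls * (Tc P + dc P / a2 P) = Gc P) by (unfold Ls, Rdiv at 1; rewrite Rmult_assoc, Rinv_l; lra).
  assert (HD : 0 < Dc P Ls).
  { assert (E : Dc P Ls * a2 P = Ls * (om P * (1 - dc P) + mu P) + ph P * mu P + mu P * a2 P).
    { unfold Dc. rewrite Ha2. field. lra. }
    assert (0 < Dc P Ls * a2 P).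
    { rewrite E. assert (0 <= om P * (1 - dc P)) by nra. nra. }
    nra. }
  set (Ss := Lam P / Dc P Ls).
  assert (HSs : 0 < Ss) by (apply Rdiv_lt_0_compat; lra).
  assert (HSe : Ss * Dc P Ls = Lam P) by (unfold Ss, Rdiv; rewrite Rmult_assoc, Rinv_l; lra).
  exists (mkx P Ls Ss). split.
  - apply exist_core; auto.
  - intros y Hy. destruct (uniq_core P y HV Hc Ho Hy) as (Ey & HS & E1 & E2).
    set (L := force_inf P y) in *. set (S := sS y) in *.
    assert (EL : L = Ls).
    { apply (Rmult_eq_reg_r (Tc P + dc P / a2 P)); lra. }
    rewrite EL in E2.
    assert (ES : S = Ss).
    { apply (Rmult_eq_reg_r (Dc P Ls)); lra. }
    rewrite Ey. fold L S. rewrite EL, ES. reflexivity.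
Qed.
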